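(* Let $f\in\mathbb{Q}[x]$ be a product of cyclotomic polynomials, $f=\Phi_{i_1}^{e_1}\Phi_{i_2}^{e_2}\cdots\Phi_{i_k}^{e_k}$, where the $i_j$ are distinct positive integers, the $e_j$ are positive integers, and $\Phi_n$ denotes the $n$-th cyclotomic polynomial. Then $h=(x^{\operatorname{lcm}(i_1,\dots,i_k)}-1)^{\max_j e_j}$ is a sparsest multiple of $f$: $h$ is a multiple of $f$, and no nonzero multiple of $f$ in $\mathbb{Q}[x]$ has fewer nonzero coefficients than $h$. *)

(* Defs.v *)
From mathcomp Require Import all_boot all_order all_algebra all_field.
Set Implicit Arguments. Unset Strict Implicit. Unset Printing Implicit Defensive.
Import GRing.Theory.
Local Open Scope ring_scope.

Definition PhiQ (n : nat) : {poly rat} := map_poly intr ('Phi_n).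

Definition nnz (p : {poly rat}) : nat := count (fun c => c != 0) (polyseq p).

(* Main.v *)
Require Import Defs.
From mathcomp Require Import all_boot all_order all_algebra all_field.
Import GRing.Theory Num.Theory.
Local Open Scope ring_scope.

Lemma nnzE (p : {poly rat}) N : (size p <= N)%N ->
  nnz p = count (fun i => p`_i != 0) (iota 0 N).
Proof.
move=> hN; rewrite /nnz -(subnKC hN) iotaD count_cat.
have -> : count (fun i => p`_i != 0) (iota (0 + size p) (N - size p)) = 0%N.
  apply/eqP; rewrite -leqn0 leqNgt -has_count; apply/hasPn => j.
  rewrite mem_iota add0n => /andP[hj _].
  by rewrite nth_default // eqxx.
by rewrite addn0 -[in LHS](mkseq_nth 0 p) /mkseq count_map.
Qed.

Lemma nnz_le_seq (p : {poly rat}) s : (forall i, p`_i != 0 -> i \in s) ->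
  (nnz p <= size s)%N.
Proof.
move=> H; rewrite (@nnzE p _ (leqnn _)) -size_filter; apply: uniq_leq_size.
  by rewrite filter_uniq // iota_uniq.
by move=> x; rewrite mem_filter => /andP[h _]; exact: H.
Qed.

Lemma size_deriv_le (g : {poly rat}) : (size g^`() <= size g)%N.
Proof.
apply/leq_sizeP => j hj; rewrite coef_deriv nth_default ?mul0rn //.
exact: leq_trans hj _.
Qed.

Lemma nnz_deriv (g : {poly rat}) : g`_0 != 0 -> nnz g = (nnz g^`()).+1.
Proof.
move=> g0.
rewrite (@nnzE g _ (leqnSn (size g))) (@nnzE _ _ (size_deriv_le g)) /= g0.
rewrite -[1%N]addn0 iotaDl count_map add1n; congr S.
apply: eq_count => j /=; rewrite coef_deriv mulrn_eq0 /=.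
by [].
Qed.

Lemma nnz_gt0 (g : {poly rat}) : g != 0 -> (0 < nnz g)%N.
Proof.
move=> gn0; rewrite /nnz -has_count; apply/hasP; exists (lead_coef g).
  by rewrite lead_coefE mem_nth // prednK // size_poly_gt0.
by rewrite lead_coef_eq0.
Qed.

Lemma key (p : {poly rat}) : (1 < size p)%N -> ~~ root p 0 ->
  forall m g, g != 0 -> p ^+ m %| g -> (m < nnz g)%N.
Proof.
move=> sp rp m; elim: m => [|m IH] g.
  by move=> gn0 _; exact: nnz_gt0.
have pn0 : p != 0 by rewrite -size_poly_gt0 (ltn_trans _ sp).
have cop : coprimep (p ^+ m.+1) 'X.
  by apply: coprimep_expl; have := coprimep_XsubC p 0; rewrite polyC0 subr0 => ->.
elim: {g}(size g).+1 {-2}g (ltnSn (size g)) => [|n IHn] g.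
  by [].
rewrite ltnS => hs gn0 dg.
have [g0|g0] := eqVneq g`_0 0.
  have Xg : 'X %| g by rewrite -(subr0 'X) -polyC0 dvdp_XsubCl /root horner_coef0 g0.
  set g1 := g %/ 'X.
  have eg : g = g1 * 'X by rewrite divpK.
  have g1n0 : g1 != 0 by apply: contraNneq gn0 => h; rewrite eg h mul0r.
  have ps : polyseq g = 0 :: polyseq g1 by rewrite eg polyseqMX.
  have -> : nnz g = nnz g1 by rewrite /nnz ps /= ?eqxx.
  apply: IHn => //.
    by move: hs; rewrite ps.
  by rewrite -(Gauss_dvdpl _ cop) -eg.
rewrite (@nnz_deriv g g0) ltnS; apply: IH.
  apply/eqP => d0.
  have s1 : (size g <= 1)%N.
    apply/leq_sizeP => j hj; case: j hj => // j _.
    have := congr1 (fun q : {poly rat} => q`_j) d0; rewrite /= coef_deriv coef0.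
    by move/eqP; rewrite mulrn_eq0 /= => /eqP.
  have : (size (p ^+ m.+1) <= size g)%N by apply: dvdp_leq.
  have : (size p <= size (p ^+ m.+1))%N.
    by apply: dvdp_leq; [exact: expf_neq0|rewrite exprS dvdp_mulIl].
  move=> h1 h2; have := leq_trans (leq_trans h1 h2) s1.
  by rewrite leqNgt sp.
case/dvdpP: dg => q ->; rewrite derivM deriv_exp; apply: dvdp_add.
  by apply: dvdp_mull; rewrite exprS dvdp_mulIr.
have -> : q * (p^`() * p ^+ m.+1.-1 *+ m.+1) = (q * p^`() *+ m.+1) * p ^+ m.
  by rewrite /= mulrnAl mulrnAr mulrA.
exact: dvdp_mulIr.
Qed.

Lemma PhiQ_prod n : (0 < n)%N -> \prod_(d <- divisors n) PhiQ d = 'X^n - 1.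
Proof.
move=> n0; rewrite /PhiQ -rmorph_prod prod_Cyclotomic //.
by rewrite rmorphB /= map_polyXn rmorph1.
Qed.

Lemma PhiQ_dvd n : (0 < n)%N -> PhiQ n %| 'X^n - 1.
Proof.
move=> n0; rewrite -PhiQ_prod // (bigD1_seq n) ?divisors_uniq //=.
  exact: dvdp_mulIl.
by rewrite -dvdn_divisors.
Qed.

Lemma PhiQ_size n : (0 < n)%N -> (1 < size (PhiQ n))%N.
Proof.
move=> n0; rewrite /PhiQ size_map_poly_id0 ?size_Cyclotomic ?ltnS ?totient_gt0 //.
by rewrite (monicP (Cyclotomic_monic n)) rmorph1 oner_neq0.
Qed.

Lemma PhiQ_root n : (0 < n)%N -> ~~ root (PhiQ n) 0.
Proof.
move=> n0; apply/negP => /(root_dvdp (@PhiQ_dvd n n0)).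
by rewrite /root !hornerE expr0n gtn_eqF // sub0r oppr_eq0 oner_eq0.
Qed.

Lemma comp_exp (q r : {poly rat}) n : (q ^+ n) \Po r = (q \Po r) ^+ n.
Proof.
elim: n => [|n IHn]; first by rewrite !expr0 -polyC1 comp_polyC.
by rewrite !exprS comp_polyM IHn.
Qed.

Theorem corollary4p2 (k : nat) (i e : 'I_k -> nat)
  (i_inj : injective i) (i_pos : forall j, (0 < i j)%N) (e_pos : forall j, (0 < e j)%N) :
  let f : {poly rat} := \prod_(j < k) PhiQ (i j) ^+ e j in
  let h : {poly rat} :=
    ('X^(\big[lcmn/1%N]_(j < k) i j) - 1) ^+ (\max_(j < k) e j) in
  (f %| h)%R /\ (forall g : {poly rat}, g != 0 -> (f %| g)%R -> (nnz h <= nnz g)%N).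
Proof.
move=> f h.
set L := \big[lcmn/1%N]_(j < k) i j.
set E := \max_(j < k) e j.
have L0 : (0 < L)%N.
  by rewrite /L; elim/big_ind: _ => // x y hx hy; rewrite lcmn_gt0 hx hy.
have iL j : (i j %| L)%N.
  by move: (dvdnn L); rewrite {2}/L => /dvdn_biglcmP; apply.
split.
  apply: (@dvdp_trans _ (\prod_(j < k) PhiQ (i j) ^+ E)).
    rewrite /f; elim/big_ind2: _ => //.
      by move=> x1 x2 y1 y2; apply: dvdp_mul.
    by move=> j _; apply: dvdp_exp2l; apply: leq_bigmax.
  rewrite prodrXl /h; apply: dvdp_exp2r.
  rewrite -(@PhiQ_prod L L0).
  set s := [seq i j | j <- enum 'I_k].
  have -> : \prod_(j < k) PhiQ (i j) = \prod_(d <- s) PhiQ d.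
    by rewrite big_map big_enum.
  rewrite [X in _ %| X](bigID (fun d => d \in s)) /=; apply: dvdp_mulr.
  rewrite -[X in _ %| X]big_filter.
  have ps : perm_eq s [seq d <- divisors L | d \in s].
    apply: uniq_perm.
        by rewrite (map_inj_uniq i_inj) enum_uniq.
      by rewrite filter_uniq // divisors_uniq.
    move=> x; rewrite mem_filter; case: (boolP (x \in s)) => //= /mapP[j _ ->].
    by rewrite -dvdn_divisors ?iL.
  by rewrite (perm_big _ ps).
move=> g gn0 fg.
have hnnz : (nnz h <= E.+1)%N.
  have -> : h = (('X - 1) ^+ E) \Po 'X^L by rewrite comp_exp comp_polyB comp_polyX -polyC1 comp_polyC.
  apply: (leq_trans (@nnz_le_seq _ [seq (L * m)%N | m <- iota 0 E.+1] _)).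
    move=> x; rewrite coef_comp_poly_Xn //; case: ifP => [/dvdnP[m ->] | _]; last by rewrite eqxx.
    rewrite mulnK // => hm; apply/mapP; exists m; last by rewrite mulnC.
    rewrite mem_iota add0n /=; move: hm; apply: contraNT; rewrite -leqNgt => h'.
    by rewrite nth_default // -polyC1 size_exp_XsubC.
  by rewrite size_map size_iota.
apply: (leq_trans hnnz).
have H : forall j, (e j < nnz g)%N.
  move=> j; apply: (@key _ (@PhiQ_size _ (i_pos j)) (@PhiQ_root _ (i_pos j)) _ g gn0).
  by apply: dvdp_trans fg; rewrite /f (bigD1 j) //=; exact: dvdp_mulIl.
have g0 := @nnz_gt0 g gn0.
rewrite -(prednK g0) ltnS; apply/bigmax_leqP => j _; rewrite -ltnS prednK //.
Qed.
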